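(* Let $N$ be a positive integer, $a,b,c\in\mathbb{R}$ with $a\neq0$, $W=[w_{ij}]\in\mathbb{R}^{N\times N}$ with $w_{ii}=0$ for all $i$, $\Delta=\mathrm{diag}(\delta_1,\dots,\delta_N)$ with $\delta_i\in\{0,1\}$, and $h>0$. Put $\Phi_s=e^{ah}I_N+\frac{c}{a}(e^{ah}-1)W$ and $\Psi_s=\frac{b}{a}(e^{ah}-1)\Delta$. If the pair $(W,\Delta)$ is controllable, $b\neq0$ and $c\neq0$, then the discrete-time system $X(k+1)=\Phi_sX(k)+\Psi_sU(k)$ is controllable.
   Context: This is the networked sampled-data system with one-dimensional node dynamics (node state matrix $a$, input matrix $b$, and inner coupling $HC=c$). The discrete-time system $X(k+1)=\Phi_sX(k)+\Psi_sU(k)$, $X(k)\in\mathbb{R}^N$, $U(k)\in\mathbb{R}^N$, is called controllable if every initial state can be steered to the origin in finitely many steps. For $F\in\mathbb{C}^{q\times q}$, $G\in\mathbb{C}^{q\times s}$, the pair $(F,G)$ is called controllable if $\mathrm{rank}[sI_q-F,\ G]=q$ for every $s\in\mathbb{C}$. *)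

(* Defs.v *)
From HB Require Import structures.
From mathcomp Require Import all_boot all_order all_algebra.
From mathcomp Require Import complex.
From mathcomp Require Import reals sequences.
Set Implicit Arguments. Unset Strict Implicit. Unset Printing Implicit Defensive.
Import Order.TTheory GRing.Theory Num.Theory.
Local Open Scope ring_scope.

Definition pair_controllable (K : fieldType) (q s : nat)
  (F : 'M[K]_q) (G : 'M[K]_(q, s)) : Prop :=
  forall z : K, \rank (row_mx (z%:M - F) G) = q.

Fixpoint traj (K : pzRingType) (N : nat) (Phi Psi : 'M[K]_N) (X0 : 'cV[K]_N)
  (U : nat -> 'cV[K]_N) (k : nat) : 'cV[K]_N :=
  match k with
  | 0 => X0
  | k'.+1 => Phi *m traj Phi Psi X0 U k' + Psi *m U k'
  end.

Definition dt_controllable (K : pzRingType) (N : nat) (Phi Psi : 'M[K]_N) : Prop :=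
  forall X0 : 'cV[K]_N, exists (k : nat) (U : nat -> 'cV[K]_N),
    traj Phi Psi X0 U k = 0.

Definition cplx_mx (R : rcfType) (m n : nat) (A : 'M[R]_(m, n)) : 'M[complex R]_(m, n) :=
  map_mx (fun x : R => Complex x 0) A.

(* Main.v *)
Require Import Defs.
From HB Require Import structures.
From mathcomp Require Import all_boot all_order all_algebra.
From mathcomp Require Import complex.
From mathcomp Require Import reals sequences exp.
Import Order.TTheory GRing.Theory Num.Theory.
Local Open Scope ring_scope.
Lemma eig_closed (C : closedFieldType) m n (K : 'M[C]_(m, n)) (f : 'M[C]_n) :
  (K *m f <= K)%MS -> K != 0 ->
  exists z, exists2 v : 'rV_n, (v <= K)%MS & v != 0 /\ v *m f = z *: v.
Proof.
move=> Kf K0.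
have rpos : (0 < \rank K)%N by rewrite lt0n mxrank_eq0.
set B := row_base K.
have fB : (B *m f <= B)%MS by rewrite stablemx_row_base.
have rfB : row_free B := row_base_free K.
have : size (char_poly (conjmx B f)) != 1%N.
  by rewrite size_char_poly; case: (\rank K) rpos.
case/closed_rootP => z.
rewrite -eigenvalue_root_char => /eigenvalueP [w wE w0].
have : (w <= eigenspace (conjmx B f) z)%MS by apply/eigenspaceP.
rewrite sub_eigenspace_conjmx // => /eigenspaceP vE.
exists z, (w *m B); last by rewrite mulmx_free_eq0.
by rewrite (submx_trans (submxMl w B)) // eq_row_base.
Qed.

Lemma traj_sum (K : pzRingType) n (A B : 'M[K]_n) X0 U k :
  traj A B X0 U k = A ^+ k *m X0 + \sum_(j < k) A ^+ j *m B *m U (k.-1 - j)%N.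
Proof.
have AS j : A *m A ^+ j = A ^+ j.+1 by rewrite exprS mulmxE.
elim: k => [|k IH] /=; first by rewrite expr0 mul1mx big_ord0 addr0.
rewrite IH mulmxDr mulmxA AS mulmx_sumr big_ord_recl /= expr0 mul1mx subn0.
rewrite -addrA; congr (_ + _); rewrite addrC; congr (_ + _).
apply: eq_bigr => j _; rewrite /= !mulmxA AS /bump /= add1n.
by rewrite subnS predn_sub.
Qed.

Lemma krylov (F : fieldType) n (A B : 'M[F]_n) :
  (forall K : 'M[F]_n, (K *m A <= K)%MS -> K *m B = 0 -> K = 0) ->
  dt_controllable A B.
Proof.
move=> HK.
have AS j : A *m A ^+ j = A ^+ j.+1 by rewrite exprS mulmxE.
pose S k := (\sum_(j < k) (A ^+ j *m B)^T)%MS.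
have Smono k : (S k <= S k.+1)%MS by rewrite /S big_ord_recr /= addsmxSl.
have SA k : (S k *m A^T <= S k.+1)%MS.
  rewrite /S sumsmxMr; apply/sumsmx_subP => j _.
  rewrite -trmx_mul mulmxA AS.
  exact: (sumsmx_sup (Ordinal (ltn_ord j : (j.+1 < k.+1)%N))).
have [k Sk] : exists k, (S k.+1 <= S k)%MS.
  case: (pickP (fun k : 'I_n.+1 => (S k.+1 <= S k)%MS)) => [k Hk|H]; first by exists k.
  exfalso.
  have : forall k, (k <= n.+1)%N -> (k <= \rank (S k))%N.
    elim=> [|k IH] Hk //.
    have Hk' := H (Ordinal Hk); rewrite /= in Hk'.
    have : (S k < S k.+1)%MS by rewrite ltmxE Smono Hk'.
    by move/rank_ltmx; apply: leq_ltn_trans; apply: IH; apply: ltnW.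
  move/(_ n.+1 (leqnn _)) => /leq_trans /(_ (rank_leq_col _)).
  by rewrite ltnn.
have SkB : (B^T <= S k)%MS.
  apply: submx_trans Sk; rewrite /S.
  by apply: (sumsmx_sup ord0) => //=; rewrite expr0 mul1mx.
have SkA : (S k *m A^T <= S k)%MS := submx_trans (SA k) Sk.
have full : row_full (S k).
  apply/negPn/negP => nf.
  set K := kermx (S k)^T.
  have KA : (K *m A <= K)%MS.
    apply/sub_kermxP; case/submxP: SkA => D HD.
    have E : A *m (S k)^T = (S k)^T *m D^T by rewrite -trmx_mul -HD trmx_mul trmxK.
    by rewrite -mulmxA E mulmxA mulmx_ker mul0mx.
  have KB : K *m B = 0.
    case/submxP: SkB => D HD.
    have -> : B = (S k)^T *m D^T by rewrite -[B]trmxK HD trmx_mul.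
    by rewrite mulmxA mulmx_ker mul0mx.
  have := HK K KA KB; move/eqP; rewrite -mxrank_eq0 mxrank_ker mxrank_tr subn_eq0 => hle.
  by move: nf; rewrite /row_full eqn_leq rank_leq_col hle.
move=> X0.
have : ((A ^+ k *m X0)^T <= S k)%MS by apply: submx_full.
case/sub_sumsmxP => u Hu.
case: k u Hu {Sk SkB SkA full} => [|k] u Hu.
  exists 0%N, (fun _ => 0); rewrite /=.
  by move: Hu; rewrite big_ord0 expr0 mul1mx => /eqP; rewrite trmx_eq0 => /eqP.
exists k.+1, (fun i => - (u (inord (k - i)))^T).
rewrite traj_sum.
have -> : A ^+ k.+1 *m X0 = \sum_(j < k.+1) A ^+ j *m B *m (u j)^T.
  rewrite -[LHS]trmxK Hu raddf_sum /=; apply: eq_bigr => j _.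
  by rewrite trmx_mul trmxK.
rewrite -big_split big1 // => j _ /=.
rewrite subKn; last by rewrite -ltnS.
by rewrite inord_val mulmxN subrr.
Qed.

Theorem corollary8 (R : realType) (N : nat) (a b c h : R)
  (W : 'M[R]_N) (delta : 'I_N -> R) :
  (0 < N)%N -> a != 0 ->
  (forall i : 'I_N, W i i = 0) ->
  (forall i : 'I_N, delta i = 0 \/ delta i = 1) ->
  0 < h ->
  pair_controllable (cplx_mx W) (cplx_mx (diag_mx (\row_i delta i))) ->
  b != 0 -> c != 0 ->
  dt_controllable
    ((expR (a * h))%:M + (c / a * (expR (a * h) - 1)) *: W)
    ((b / a * (expR (a * h) - 1)) *: diag_mx (\row_i delta i)).
Proof.
move=> _ a0 _ _ h0 PBH b0 c0.
set e := expR (a * h).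
set Dg := diag_mx (\row_i delta i).
have e1 : e - 1 != 0.
  rewrite subr_eq0 /e -(expR0 R); apply/eqP => /expR_inj /eqP.
  by rewrite mulf_eq0 (negbTE a0) (negbTE (lt0r_neq0 h0)).
have al0 : c / a * (e - 1) != 0 by rewrite !mulf_neq0 ?invr_eq0.
have be0 : b / a * (e - 1) != 0 by rewrite !mulf_neq0 ?invr_eq0.
set al := c / a * (e - 1).
set be := b / a * (e - 1).
apply: krylov => K KA KB; apply/eqP/negPn/negP => K0.
pose f := real_complex R.
have Kc0 : map_mx f K != 0 by rewrite -mxrank_eq0 mxrank_map mxrank_eq0.
have KcA : (map_mx f K *m map_mx f (e%:M + al *: W) <= map_mx f K)%MS by rewrite -map_mxM map_submx.
have [z [v vK [v0 vE]]] := @eig_closed _ _ _ _ _ KcA Kc0.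
have vB : v *m map_mx f Dg = 0.
  case/submxP: vK => D ->.
  have : D *m map_mx f K *m map_mx f (be *: Dg) = 0 by rewrite -mulmxA -map_mxM KB map_mx0 mulmx0.
  rewrite map_mxZ -scalemxAr => /eqP; rewrite scaler_eq0 fmorph_eq0 (negbTE be0) /=.
  by move/eqP.
have fal : f al != 0 by rewrite fmorph_eq0.
pose s := (z - f e) / f al.
have vW : v *m map_mx f W = s *: v.
  move: vE; rewrite map_mxD map_scalar_mx map_mxZ mulmxDr mul_mx_scalar -scalemxAr => vE.
  have : f al *: (v *m map_mx f W) = (z - f e) *: v by rewrite scalerBl -vE addrC addKr.
  move/(congr1 (fun x => (f al)^-1 *: x)); rewrite !scalerA mulVf // scale1r => ->.
  by rewrite /s mulrC.
have := PBH s.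
have -> : cplx_mx W = map_mx f W by [].
have -> : cplx_mx Dg = map_mx f Dg by [].
move=> rk.
have : (v <= kermx (row_mx (s%:M - map_mx f W) (map_mx f Dg)))%MS.
  apply/sub_kermxP; rewrite mul_mx_row vB mulmxBr vW mul_mx_scalar subrr.
  by rewrite row_mx0.
have : kermx (row_mx (s%:M - map_mx f W) (map_mx f Dg)) == 0 by rewrite -mxrank_eq0 mxrank_ker rk subnn.
move/eqP => ->; rewrite submx0 => /eqP v00.
by rewrite v00 eqxx in v0.
Qed.
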